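(* Let $N\ge1$, let $a_1,\dots,a_N\ge 0$, let $b_1,\dots,b_N>0$ be pairwise distinct, set $a=\sum_{j=1}^Na_j$, and let $u_0\in\mathbb{R}$. Let $p(t)=(u(t),v_1(t),\dots,v_N(t))$ be the solution of $$\dot u=-a u+b_1v_1,\quad \dot v_j=a_ju-b_jv_j+b_{j+1}v_{j+1}\ (1\le j\le N-1),\quad \dot v_N=a_Nu-b_Nv_N,$$ with $p(0)=(u_0,0,\dots,0)$. Then $u$ solves the memory equation $$\dot u(t)=-a\,u(t)+\int_0^tK(t-s)u(s)\,ds,\qquad u(0)=u_0,$$ where $K(t)=\sum_{j=1}^Na_jK_j(t)$ with $K_j(t)=\sum_{i=1}^j b_i\psi_i^je^{-b_it}$ and $\psi_i^j=\prod_{k=1,k\neq i}^j\frac{b_k}{b_k-b_i}$. Moreover $a=k(0)$ where $k$ is the Laplace transform of $K$, each $K_j(t)\ge0$ and hence $K(t)\ge 0$ for all $t\ge0$, and $u(t)\to u_0/Z$ as $t\to\infty$, where $$Z=1+\sum_{i=1}^N\frac1{b_i}\sum_{j=i}^Na_j.$$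
   Context: The system is $\dot p=A^*p$ where $A^*$ is the $(N+1)\times(N+1)$ matrix with first row $(-a,b_1,0,\dots,0)$, and for $j=1,\dots,N$ the row $j$ (indexing rows from $0$) has entry $a_j$ in column $0$, $-b_j$ on the diagonal and $b_{j+1}$ in column $j+1$ (if $j<N$), all other entries zero. It is the transpose of a Markov generator (nonnegative off-diagonal entries, zero column sums). The Laplace transform is $k(\lambda)=\int_0^\infty e^{-\lambda t}K(t)\,dt$; one has $k(\lambda)=\sum_j a_j\prod_{i=1}^j\frac{b_i}{\lambda+b_i}$. *)

(* Defs.v *)
From Stdlib Require Import Reals Lra Lia List.
Import ListNotations.
Open Scope R_scope.

Definition sum_range (lo hi : nat) (f : nat -> R) : R :=
  fold_right (fun i acc => f i + acc) 0 (seq lo (S hi - lo)).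

Definition prod_range (lo hi : nat) (f : nat -> R) : R :=
  fold_right (fun i acc => f i * acc) 1 (seq lo (S hi - lo)).

Definition psi (b : nat -> R) (i j : nat) : R :=
  prod_range 1 j (fun k => if Nat.eq_dec k i then 1 else b k / (b k - b i)).

Definition Kj (b : nat -> R) (j : nat) (t : R) : R :=
  sum_range 1 j (fun i => b i * psi b i j * exp (- b i * t)).

Definition Kker (N : nat) (a b : nat -> R) (t : R) : R :=
  sum_range 1 N (fun j => a j * Kj b j t).

Definition improper_int_0_inf (f : R -> R) (l : R) : Prop :=
  forall eps : R, eps > 0 -> exists T0 : R, forall T : R, T >= T0 ->
    exists pr : Riemann_integrable f 0 T, Rabs (RiemannInt pr - l) < eps.

Definition laplace_at (K : R -> R) (lam l : R) : Prop :=
  improper_int_0_inf (fun t => exp (- lam * t) * K t) l.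

(* Main.v *)
Require Import Defs.
From Stdlib Require Import Reals Lra Lia List.
From Coquelicot Require Import Coquelicot.
Open Scope R_scope.

Lemma sr_empty lo hi f : (hi < lo)%nat -> sum_range lo hi f = 0.
Proof. intros H. unfold sum_range. replace (S hi - lo)%nat with 0%nat by lia. reflexivity. Qed.

Lemma sr_first lo hi f : (lo <= hi)%nat -> sum_range lo hi f = f lo + sum_range (S lo) hi f.
Proof. intros H. unfold sum_range. replace (S hi - lo)%nat with (S (S hi - S lo)) by lia. reflexivity. Qed.

Lemma sr_last lo hi f : (lo <= S hi)%nat -> sum_range lo (S hi) f = sum_range lo hi f + f (S hi).
Proof. intros H. unfold sum_range. replace (S (S hi) - lo)%nat with (S (S hi - lo)) by lia.
  rewrite seq_S, fold_right_app. replace (lo + (S hi - lo))%nat with (S hi) by lia.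
  cbn [fold_right]. generalize (seq lo (S hi - lo)). intros l. induction l; simpl; [lra|]. rewrite IHl. lra. Qed.

Lemma sr_ext lo hi f g : (forall i, (lo <= i <= hi)%nat -> f i = g i) -> sum_range lo hi f = sum_range lo hi g.
Proof. intros H. unfold sum_range. assert (Hl: forall i, In i (seq lo (S hi - lo)) -> f i = g i).
  { intros i Hi. apply in_seq in Hi. apply H. lia. }
  induction (seq lo (S hi - lo)); simpl; auto. rewrite Hl by (left; auto). rewrite IHl; auto.
  intros; apply Hl; right; auto. Qed.

Lemma sr_plus lo hi f g : sum_range lo hi (fun i => f i + g i) = sum_range lo hi f + sum_range lo hi g.
Proof. unfold sum_range. induction (seq lo (S hi - lo)); simpl; lra. Qed.

Lemma sr_scal lo hi c f : sum_range lo hi (fun i => c * f i) = c * sum_range lo hi f.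
Proof. unfold sum_range. induction (seq lo (S hi - lo)); simpl; lra. Qed.

Lemma sr_zero lo hi : sum_range lo hi (fun _ => 0) = 0.
Proof. unfold sum_range. induction (seq lo (S hi - lo)); simpl; lra. Qed.

Lemma sr_zero' lo hi f : (forall i, (lo <= i <= hi)%nat -> f i = 0) -> sum_range lo hi f = 0.
Proof. intros H. rewrite (sr_ext _ _ _ (fun _ => 0)) by auto. apply sr_zero. Qed.

Lemma sr_shift lo hi f : sum_range (S lo) (S hi) f = sum_range lo hi (fun i => f (S i)).
Proof. unfold sum_range. replace (S (S hi) - S lo)%nat with (S hi - lo)%nat by lia.
  generalize (S hi - lo)%nat. intros n. revert lo. induction n; intros lo; simpl; auto. rewrite IHn; auto. Qed.

Lemma sr_le lo hi f g : (forall i, (lo <= i <= hi)%nat -> f i <= g i) -> sum_range lo hi f <= sum_range lo hi g.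
Proof. intros H. unfold sum_range. assert (Hl: forall i, In i (seq lo (S hi - lo)) -> f i <= g i).
  { intros i Hi. apply in_seq in Hi. apply H. lia. }
  induction (seq lo (S hi - lo)) as [|a0 l IHl]; simpl; [lra|].
  assert (f a0 <= g a0) by (apply Hl; left; auto). assert (fold_right (fun i acc => f i + acc) 0 l <= fold_right (fun i acc => g i + acc) 0 l) by (apply IHl; intros; apply Hl; right; auto). lra. Qed.

Lemma sr_nonneg lo hi f : (forall i, (lo <= i <= hi)%nat -> 0 <= f i) -> 0 <= sum_range lo hi f.
Proof. intros H. rewrite <- (sr_zero lo hi). apply sr_le. auto. Qed.

Lemma sr_split lo mid hi f : (lo <= S mid)%nat -> (mid <= hi)%nat ->
  sum_range lo hi f = sum_range lo mid f + sum_range (S mid) hi f.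
Proof. intros H1 H2. induction hi.
  - assert (mid = 0%nat) by lia. subst. rewrite (sr_empty 1 0) by lia. lra.
  - destruct (Nat.eq_dec mid (S hi)).
    + subst. rewrite (sr_empty (S (S hi))) by lia. lra.
    + rewrite !sr_last by lia. rewrite IHhi by lia. lra. Qed.

Lemma pr_first lo hi f : (lo <= hi)%nat -> prod_range lo hi f = f lo * prod_range (S lo) hi f.
Proof. intros H. unfold prod_range. replace (S hi - lo)%nat with (S (S hi - S lo)) by lia. reflexivity. Qed.

Lemma pr_empty lo hi f : (hi < lo)%nat -> prod_range lo hi f = 1.
Proof. intros H. unfold prod_range. replace (S hi - lo)%nat with 0%nat by lia. reflexivity. Qed.

Lemma pr_ext lo hi f g : (forall i, (lo <= i <= hi)%nat -> f i = g i) -> prod_range lo hi f = prod_range lo hi g.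
Proof. intros H. unfold prod_range. assert (Hl: forall i, In i (seq lo (S hi - lo)) -> f i = g i).
  { intros i Hi. apply in_seq in Hi. apply H. lia. }
  induction (seq lo (S hi - lo)); simpl; auto. rewrite Hl by (left; auto). rewrite IHl; auto.
  intros; apply Hl; right; auto. Qed.

Lemma D_ext f g x l : (forall t, f t = g t) -> derivable_pt_lim f x l -> derivable_pt_lim g x l.
Proof. intros E H eps He. destruct (H eps He) as [d Hd]. exists d. intros h H1 H2.
  rewrite <- !E. auto. Qed.

Lemma D_mult f g x lf lg : derivable_pt_lim f x lf -> derivable_pt_lim g x lg ->
  derivable_pt_lim (fun t => f t * g t) x (lf * g x + f x * lg).
Proof. intros. exact (derivable_pt_lim_mult f g x lf lg H H0). Qed.

Lemma D_plus f g x lf lg : derivable_pt_lim f x lf -> derivable_pt_lim g x lg ->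
  derivable_pt_lim (fun t => f t + g t) x (lf + lg).
Proof. intros. exact (derivable_pt_lim_plus f g x lf lg H H0). Qed.

Lemma D_const c x : derivable_pt_lim (fun _ => c) x 0.
Proof. exact (derivable_pt_lim_const c x). Qed.

Lemma D_scal c f x l : derivable_pt_lim f x l -> derivable_pt_lim (fun t => c * f t) x (c * l).
Proof. intros H. replace (c * l) with (0 * f x + c * l) by ring. apply D_mult; auto. apply D_const. Qed.

Lemma D_minus f g x lf lg : derivable_pt_lim f x lf -> derivable_pt_lim g x lg ->
  derivable_pt_lim (fun t => f t - g t) x (lf - lg).
Proof. intros. exact (derivable_pt_lim_minus f g x lf lg H H0). Qed.

Lemma D_explin c x : derivable_pt_lim (fun t => exp (c * t)) x (c * exp (c * x)).
Proof. replace (c * exp (c * x)) with (exp (c*x) * c) by ring.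
  apply (derivable_pt_lim_comp (fun t => c * t) exp x c).
  - pose proof (D_scal c id x 1 (derivable_pt_lim_id x)) as H. rewrite Rmult_1_r in H. exact H.
  - apply derivable_pt_lim_exp. Qed.

Lemma D_sum lo hi (F : nat -> R -> R) dF x :
  (forall i, (lo <= i <= hi)%nat -> derivable_pt_lim (F i) x (dF i)) ->
  derivable_pt_lim (fun t => sum_range lo hi (fun i => F i t)) x (sum_range lo hi dF).
Proof. induction hi; intros H.
  - destruct lo.
    + apply (D_ext (fun t => F 0%nat t)). intros t. unfold sum_range. simpl. ring.
      unfold sum_range. simpl. rewrite Rplus_0_r. apply H. lia.
    + apply (D_ext (fun _ => 0)). intros; rewrite sr_empty by lia; auto. rewrite sr_empty by lia. apply D_const.
  - destruct (Compare_dec.le_lt_dec lo (S hi)).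
    + apply (D_ext (fun t => sum_range lo hi (fun i => F i t) + F (S hi) t)).
      intros; rewrite sr_last by lia; auto. rewrite sr_last by lia. apply D_plus; [apply IHhi; intros; apply H; lia | apply H; lia].
    + apply (D_ext (fun _ => 0)). intros; rewrite sr_empty by lia; auto. rewrite sr_empty by lia. apply D_const. Qed.

Lemma D_cont f x l : derivable_pt_lim f x l -> continuous f x.
Proof. intros H. apply (@ex_derive_continuous R_AbsRing R_NormedModule). exists l. apply is_derive_Reals. auto. Qed.

Lemma I_scal f a b k l : is_RInt f a b l -> is_RInt (fun x => k * f x) a b (k * l).
Proof. intros H. exact (is_RInt_scal f a b k l H). Qed.

Lemma I_zero x y : is_RInt (fun _ => 0) x y 0.
Proof. pose proof (@is_RInt_const R_NormedModule x y 0) as H.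
  replace (scal (y - x) (0:R_NormedModule)) with 0 in H; auto. symmetry. apply Rmult_0_r. Qed.

Lemma I_sum lo hi (F : nat -> R -> R) I x y :
  (forall i, (lo <= i <= hi)%nat -> is_RInt (F i) x y (I i)) ->
  is_RInt (fun t => sum_range lo hi (fun i => F i t)) x y (sum_range lo hi I).
Proof. induction hi; intros H.
  - destruct lo.
    + apply (is_RInt_ext (fun t => F 0%nat t)). intros t _. unfold sum_range. simpl. ring.
      unfold sum_range. simpl. rewrite Rplus_0_r. apply H. lia.
    + apply (is_RInt_ext (fun _ => 0)). intros; rewrite sr_empty by lia; auto. rewrite sr_empty by lia.
      apply I_zero.
  - destruct (Compare_dec.le_lt_dec lo (S hi)).
    + apply (is_RInt_ext (fun t => plus (sum_range lo hi (fun i => F i t)) (F (S hi) t))).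
      intros; rewrite sr_last by lia; auto. rewrite sr_last by lia. apply (@is_RInt_plus R_NormedModule).
      apply IHhi; intros; apply H; lia. apply H; lia.
    + apply (is_RInt_ext (fun _ => 0)). intros; rewrite sr_empty by lia; auto. rewrite sr_empty by lia.
      apply I_zero. Qed.

Definition gpsi (b : nat -> R) (m i j : nat) : R :=
  prod_range m j (fun k => if Nat.eq_dec k i then 1 else b k / (b k - b i)).

Lemma gpsi_bot_ne b m i j : (m <= j)%nat -> i <> m -> gpsi b m i j = b m / (b m - b i) * gpsi b (S m) i j.
Proof. intros H1 H2. unfold gpsi. rewrite pr_first by lia. destruct (Nat.eq_dec m i); [lia|auto]. Qed.

Lemma gpsi_bot_eq b m j : (m <= j)%nat -> gpsi b m m j = prod_range (S m) j (fun k => b k / (b k - b m)).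
Proof. intros H1. unfold gpsi. rewrite pr_first by lia. destruct (Nat.eq_dec m m); [|lia].
  rewrite Rmult_1_l. apply pr_ext. intros k Hk. destruct (Nat.eq_dec k m); [lia|auto]. Qed.

Lemma gpsi_jj b j : gpsi b j j j = 1.
Proof. rewrite gpsi_bot_eq by lia. apply pr_empty. lia. Qed.

Section Alg.
Variable N : nat.
Variable b : nat -> R.
Hypothesis Hb : forall j, (1 <= j <= N)%nat -> 0 < b j.
Hypothesis Hd : forall i j, (1 <= i <= N)%nat -> (1 <= j <= N)%nat -> i <> j -> b i <> b j.

Lemma PF_T : forall d m, (1 <= m)%nat -> (m + d <= N)%nat ->
  (forall lam, (forall k, (m <= k <= m + d)%nat -> lam + b k <> 0) ->
     prod_range m (m + d) (fun k => b k / (lam + b k)) =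
     sum_range m (m + d) (fun i => b i * gpsi b m i (m + d) / (lam + b i))) /\
  ((0 < d)%nat -> sum_range m (m + d) (fun i => b i * gpsi b m i (m + d)) = 0).
Proof.
  induction d; intros m Hm HN.
  - split; [|lia]. intros lam Hl. rewrite Nat.add_0_r.
    rewrite pr_first, pr_empty, sr_first, sr_empty, gpsi_jj by lia. field. apply Hl; lia.
  - destruct (IHd (S m)) as [IP _]; try lia.
    replace (S m + d)%nat with (m + S d)%nat in IP by lia.
    set (j := (m + S d)%nat) in *. assert (Hj: (j = m + S d)%nat) by reflexivity. clearbody j.
    assert (HT : sum_range m j (fun i => b i * gpsi b m i j) = 0).
    { rewrite sr_first by lia. rewrite gpsi_bot_eq by lia.
      assert (E : prod_range (S m) j (fun k => b k / (b k - b m)) =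
                  prod_range (S m) j (fun k => b k / (- b m + b k))).
      { apply pr_ext. intros k Hk. f_equal. ring. }
      rewrite E, IP.
      2:{ intros k Hk. assert (b k <> b m) by (apply Hd; lia). intro; apply H; lra. }
      rewrite <- sr_scal, <- sr_plus. apply sr_zero'. intros i Hi.
      rewrite (gpsi_bot_ne b m i j) by lia.
      assert (b i <> b m) by (apply Hd; lia).
      field. split; intro; apply H; lra. }
    split; [|intros; exact HT].
    intros lam Hl. rewrite pr_first by lia. rewrite IP by (intros; apply Hl; lia).
    rewrite (sr_first m j) by lia. rewrite sr_first in HT by lia.
    assert (Hb0 : b m * gpsi b m m j = - sum_range (S m) j (fun i => b i * gpsi b m i j)) by lra.
    replace (b m * gpsi b m m j / (lam + b m)) with (b m * gpsi b m m j * / (lam + b m)) by (unfold Rdiv; ring).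
    rewrite Hb0.
    rewrite <- sr_scal. replace (- sum_range (S m) j (fun i => b i * gpsi b m i j) * / (lam + b m)) with
      (sum_range (S m) j (fun i => - / (lam + b m) * (b i * gpsi b m i j))) by (rewrite sr_scal; ring).
    rewrite <- sr_plus. apply sr_ext. intros i Hi.
    rewrite (gpsi_bot_ne b m i j) by lia.
    assert (b i <> b m) by (apply Hd; lia).
    assert (lam + b m <> 0) by (apply Hl; lia).
    assert (lam + b i <> 0) by (apply Hl; lia).
    field. repeat split; auto. intro; apply H; lra.
Qed.

Lemma PF m j lam : (1 <= m)%nat -> (m <= j <= N)%nat -> (forall k, (m <= k <= j)%nat -> lam + b k <> 0) ->
     prod_range m j (fun k => b k / (lam + b k)) =
     sum_range m j (fun i => b i * gpsi b m i j / (lam + b i)).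
Proof. intros. replace j with (m + (j - m))%nat by lia. apply PF_T; try lia.
  replace (m + (j - m))%nat with j by lia. auto. Qed.

Lemma Tid m j : (1 <= m)%nat -> (m < j <= N)%nat -> sum_range m j (fun i => b i * gpsi b m i j) = 0.
Proof. intros. replace j with (m + (j - m))%nat by lia. apply PF_T; lia. Qed.

Definition Wg m j (c : nat -> R) := sum_range m j (fun i => b i * gpsi b m i j * c i).

Lemma W_rec m j c : (1 <= m)%nat -> (m <= j <= N)%nat ->
  sum_range m j (fun i => b i * gpsi b m i j * (b i * c i)) = b m * Wg m j c - b m * Wg (S m) j c.
Proof. intros. unfold Wg. rewrite (sr_first m j (fun i => b i * gpsi b m i j * (b i * c i))) by lia.
  rewrite (sr_first m j (fun i => b i * gpsi b m i j * c i)) by lia.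
  rewrite (sr_ext (S m) j (fun i => b i * gpsi b m i j * (b i * c i))
     (fun i => b m * (b i * gpsi b m i j * c i) + (- b m) * (b i * gpsi b (S m) i j * c i))).
  - rewrite sr_plus, !sr_scal. ring.
  - intros i Hi. rewrite (gpsi_bot_ne b m i j) by lia. assert (b i <> b m) by (apply Hd; lia).
    field. intro; apply H1; lra.
Qed.

Lemma W_u m j : (1 <= m)%nat -> (m <= j <= N)%nat ->
  sum_range m j (fun i => b i * gpsi b m i j) = if Nat.eq_dec m j then b m else 0.
Proof. intros. destruct (Nat.eq_dec m j).
  - subst. rewrite sr_first, sr_empty, gpsi_jj by lia. ring.
  - apply Tid; lia. Qed.

Lemma W_empty m c : Wg (S m) m c = 0.
Proof. unfold Wg. apply sr_empty. lia. Qed.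

End Alg.

Lemma D_Wg b m j (c : nat -> R -> R) dc t :
  (forall i, (m <= i <= j)%nat -> derivable_pt_lim (c i) t (dc i)) ->
  derivable_pt_lim (fun t => Wg b m j (fun i => c i t)) t (Wg b m j dc).
Proof. intros H. unfold Wg. apply (D_sum m j (fun i t => b i * gpsi b m i j * c i t)).
  intros i Hi. apply D_scal. auto. Qed.

Lemma Wg_neg_b b m j c : Wg b m j (fun i => - b i * c i) = - sum_range m j (fun i => b i * gpsi b m i j * (b i * c i)).
Proof. unfold Wg. replace (- sum_range m j (fun i => b i * gpsi b m i j * (b i * c i))) with
  (-1 * sum_range m j (fun i => b i * gpsi b m i j * (b i * c i))) by ring. rewrite <- sr_scal.
  apply sr_ext; intros; ring. Qed.

Definition Kg b m j t := Wg b m j (fun i => exp (- b i * t)).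

Lemma D_Kg b m j t : derivable_pt_lim (Kg b m j) t (Wg b m j (fun i => - b i * exp (- b i * t))).
Proof. apply (D_ext (fun t => Wg b m j (fun i => (fun i t => exp (- b i * t)) i t))). { intros; reflexivity. }
  apply D_Wg. intros. apply D_explin. Qed.

Lemma zero_ode f df c : (forall t, derivable_pt_lim f t (df t)) -> (forall t, df t = - c * f t) -> f 0 = 0 ->
  forall t, f t = 0.
Proof. intros Hf Hdf H0 t.
  set (G := fun t => exp (c * t) * f t).
  assert (HG : forall t, derivable_pt_lim G t 0).
  { intros s. unfold G. replace 0 with (c * exp (c * s) * f s + exp (c * s) * df s) by (rewrite Hdf; ring).
    apply (D_mult (fun t => exp (c*t)) f); auto. apply D_explin. }
  assert (G t = G 0).
  { destruct (Rtotal_order 0 t) as [Ht|[Ht|Ht]].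
    - destruct (MVT_cor2 G (fun _ => 0) 0 t Ht) as [x [Hx _]]. intros; apply HG. lra.
    - subst; auto.
    - destruct (MVT_cor2 G (fun _ => 0) t 0 Ht) as [x [Hx _]]. intros; apply HG. lra. }
  unfold G in H. rewrite H0, Rmult_0_r in H. assert (exp (c*t) > 0) by apply exp_pos. nra. Qed.

Section Pos.
Variable N : nat.
Variable b : nat -> R.
Hypothesis Hb : forall j, (1 <= j <= N)%nat -> 0 < b j.
Hypothesis Hd : forall i j, (1 <= i <= N)%nat -> (1 <= j <= N)%nat -> i <> j -> b i <> b j.

Lemma Kg_pos : forall d m, (1 <= m)%nat -> (m + d <= N)%nat -> forall t, 0 <= t -> 0 <= Kg b m (m + d) t.
Proof. induction d; intros m Hm HN t Ht.
  - rewrite Nat.add_0_r. unfold Kg, Wg. rewrite sr_first, sr_empty, gpsi_jj by lia.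
    assert (0 < b m) by (apply Hb; lia). assert (0 < exp (- b m * t)) by apply exp_pos. nra.
  - set (j := (m + S d)%nat). assert (Hj : (j = m + S d)%nat) by reflexivity. clearbody j.
    assert (IH : forall s, 0 <= s -> 0 <= Kg b (S m) j s).
    { intros s Hs. replace j with (S m + d)%nat by lia. apply IHd; auto; lia. }
    set (G := fun s => exp (b m * s) * Kg b m j s).
    set (G' := fun s => b m * exp (b m * s) * Kg b (S m) j s).
    assert (HG : forall s, derivable_pt_lim G s (G' s)).
    { intros s. unfold G, G'.
      replace (b m * exp (b m * s) * Kg b (S m) j s) with
        (b m * exp (b m * s) * Kg b m j s + exp (b m * s) * Wg b m j (fun i => - b i * exp (- b i * s))).
      apply (D_mult (fun s => exp (b m * s)) (Kg b m j)). apply D_explin. apply D_Kg.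
      rewrite Wg_neg_b, W_rec with (N := N) by (auto; lia). unfold Kg. ring. }
    assert (G0 : G 0 = 0).
    { unfold G, Kg, Wg. rewrite Rmult_0_r, exp_0, Rmult_1_l.
      rewrite (sr_ext _ _ _ (fun i => b i * gpsi b m i j)). apply Tid with (N := N); auto; lia.
      intros; rewrite Rmult_0_r, exp_0; ring. }
    assert (0 <= G t).
    { destruct (Req_dec t 0). subst; lra.
      destruct (MVT_cor2 G G' 0 t) as [x [Hx Hx2]]. lra. intros; apply HG.
      assert (0 <= G' x). { unfold G'. assert (0 < b m) by (apply Hb; lia).
        assert (0 < exp (b m * x)) by apply exp_pos. assert (0 <= Kg b (S m) j x) by (apply IH; lra).
        apply Rmult_le_pos; nra. }
      nra. }
    unfold G in H. assert (0 < exp (b m * t)) by apply exp_pos. nra.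
Qed.

Lemma Kj_pos j t : (1 <= j <= N)%nat -> 0 <= t -> 0 <= Kj b j t.
Proof. intros. replace (Kj b j t) with (Kg b 1 (1 + (j - 1)) t).
  apply Kg_pos; auto; lia. replace (1 + (j - 1))%nat with j by lia. reflexivity. Qed.

End Pos.

Definition tends0 (f : R -> R) := forall eps, eps > 0 -> exists T, forall t, t >= T -> Rabs (f t) < eps.

Lemma tends0_exp c : 0 < c -> tends0 (fun t => exp (- c * t)).
Proof. intros Hc eps He. exists ((Rabs (ln eps) + 1) / c). intros t Ht.
  rewrite Rabs_pos_eq by (left; apply exp_pos).
  rewrite <- (exp_ln eps) by lra. apply exp_increasing.
  assert (t * c >= Rabs (ln eps) + 1).
  { apply Rmult_ge_compat_r with (r := c) in Ht; [|lra]. unfold Rdiv in Ht.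
    rewrite Rmult_assoc, Rinv_l, Rmult_1_r in Ht by lra. lra. }
  pose proof (Rle_abs (- ln eps)). rewrite Rabs_Ropp in H0. nra. Qed.

Lemma tends0_scal c f : tends0 f -> tends0 (fun t => c * f t).
Proof. intros H eps He. destruct (H (eps / (Rabs c + 1))) as [T HT].
  { apply Rdiv_lt_0_compat; auto. pose proof (Rabs_pos c); lra. }
  exists T. intros t Ht. specialize (HT t Ht). rewrite Rabs_mult.
  pose proof (Rabs_pos c). pose proof (Rabs_pos (f t)).
  assert (Rabs (f t) * (Rabs c + 1) < eps).
  { apply Rmult_lt_compat_r with (r := Rabs c + 1) in HT; [|lra]. unfold Rdiv in HT.
    rewrite Rmult_assoc, Rinv_l, Rmult_1_r in HT by lra. lra. }
  nra. Qed.

Lemma tends0_plus f g : tends0 f -> tends0 g -> tends0 (fun t => f t + g t).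
Proof. intros Hf Hg eps He. destruct (Hf (eps/2)) as [T1 H1]. lra. destruct (Hg (eps/2)) as [T2 H2]. lra.
  exists (Rmax T1 T2). intros t Ht. pose proof (Rmax_l T1 T2). pose proof (Rmax_r T1 T2).
  specialize (H1 t ltac:(lra)). specialize (H2 t ltac:(lra)).
  pose proof (Rabs_triang (f t) (g t)). lra. Qed.

Lemma tends0_ext f g : (forall t, f t = g t) -> tends0 f -> tends0 g.
Proof. intros E H eps He. destruct (H eps He) as [T HT]. exists T. intros; rewrite <- E; auto. Qed.

Lemma tends0_sum lo hi (F : nat -> R -> R) : (forall i, (lo <= i <= hi)%nat -> tends0 (F i)) ->
  tends0 (fun t => sum_range lo hi (fun i => F i t)).
Proof. induction hi; intros H.
  - destruct lo.
    + apply (tends0_ext (F 0%nat)). intros. unfold sum_range; simpl; ring. apply H; lia.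
    + apply (tends0_ext (fun _ => 0)). intros; rewrite sr_empty by lia; auto.
      intros eps He. exists 0. intros. rewrite Rabs_R0. lra.
  - destruct (Compare_dec.le_lt_dec lo (S hi)).
    + apply (tends0_ext (fun t => sum_range lo hi (fun i => F i t) + F (S hi) t)).
      intros; rewrite sr_last by lia; auto. apply tends0_plus; [apply IHhi; intros; apply H; lia | apply H; lia].
    + apply (tends0_ext (fun _ => 0)). intros; rewrite sr_empty by lia; auto.
      intros eps He. exists 0. intros. rewrite Rabs_R0. lra. Qed.

Lemma pr_one lo hi f : (forall i, (lo <= i <= hi)%nat -> f i = 1) -> prod_range lo hi f = 1.
Proof. intros H. unfold prod_range. assert (Hl: forall i, In i (seq lo (S hi - lo)) -> f i = 1).
  { intros i Hi. apply in_seq in Hi. apply H. lia. }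
  induction (seq lo (S hi - lo)) as [|x l IHl]; simpl; auto. rewrite Hl by (left; auto). rewrite IHl. ring.
  intros; apply Hl; right; auto. Qed.

Lemma RI_of_is f x y l : is_RInt f x y l -> exists pr : Riemann_integrable f x y, RiemannInt pr = l.
Proof. intros H. assert (ex_RInt f x y) by (exists l; auto).
  exists (ex_RInt_Reals_0 f x y H0). rewrite <- RInt_Reals. apply is_RInt_unique. auto. Qed.

Lemma D_Kker N a b t : derivable_pt_lim (Kker N a b) t
  (sum_range 1 N (fun j => a j * Wg b 1 j (fun i => - b i * exp (- b i * t)))).
Proof. unfold Kker. apply (D_ext (fun t => sum_range 1 N (fun j => (fun j t => a j * Kg b 1 j t) j t))).
  { intros; reflexivity. } apply D_sum. intros. apply D_scal. apply D_Kg. Qed.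

Section Lap.
Variable N : nat.
Variable a b : nat -> R.
Hypothesis HN : (1 <= N)%nat.
Hypothesis Hb : forall j, (1 <= j <= N)%nat -> 0 < b j.
Hypothesis Hd : forall i j, (1 <= i <= N)%nat -> (1 <= j <= N)%nat -> i <> j -> b i <> b j.

Definition Rj j t := sum_range 1 j (fun i => gpsi b 1 i j * exp (- b i * t)).

Lemma Rj0 j : (1 <= j <= N)%nat -> Rj j 0 = 1.
Proof. intros Hj. pose proof (PF N b Hd 1 j 0 ltac:(lia) ltac:(lia)) as H.
  rewrite pr_one in H.
  2:{ intros. assert (0 < b i) by (apply Hb; lia). field. lra. }
  rewrite H.
  2:{ intros. assert (0 < b k) by (apply Hb; lia). lra. } unfold Rj. apply sr_ext. intros i Hi. assert (0 < b i) by (apply Hb; lia).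
  rewrite Rmult_0_r, exp_0. field. lra. Qed.

Lemma D_Rj j t : derivable_pt_lim (Rj j) t (sum_range 1 j (fun i => gpsi b 1 i j * (- b i * exp (- b i * t)))).
Proof. unfold Rj. apply (D_ext (fun t => sum_range 1 j (fun i => (fun i t => gpsi b 1 i j * exp (- b i * t)) i t))).
  { intros; reflexivity. } apply D_sum. intros; apply D_scal, D_explin. Qed.

Lemma Rj_t0 j : (1 <= j <= N)%nat -> tends0 (Rj j).
Proof. intros Hj. unfold Rj. apply (tends0_sum 1 j (fun i t => gpsi b 1 i j * exp (- b i * t))).
  intros i Hi. apply tends0_scal, tends0_exp. apply Hb; lia. Qed.

Lemma laplace0 : laplace_at (Kker N a b) 0 (sum_range 1 N a).
Proof.
  set (Phi := fun t => - sum_range 1 N (fun j => a j * Rj j t)).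
  assert (HD : forall t, derivable_pt_lim Phi t (exp (- 0 * t) * Kker N a b t)).
  { intros t. apply (D_ext (fun t => -1 * sum_range 1 N (fun j => (fun j t => a j * Rj j t) j t))).
    { intros; unfold Phi; ring. }
    replace (exp (- 0 * t) * Kker N a b t) with
      (-1 * sum_range 1 N (fun j => a j * sum_range 1 j (fun i => gpsi b 1 i j * (- b i * exp (- b i * t))))).
    - apply D_scal, D_sum. intros; apply D_scal, D_Rj.
    - rewrite Ropp_0, Rmult_0_l, exp_0, Rmult_1_l. unfold Kker, Kj. rewrite <- sr_scal.
      apply sr_ext. intros j _. replace (-1 * (a j * sum_range 1 j (fun i => gpsi b 1 i j * (- b i * exp (- b i * t)))))
        with (a j * (-1 * sum_range 1 j (fun i => gpsi b 1 i j * (- b i * exp (- b i * t))))) by ring.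
      f_equal. rewrite <- sr_scal. apply sr_ext. intros. unfold psi, gpsi. ring. }
  assert (Hc : forall t, continuous (fun t => exp (- 0 * t) * Kker N a b t) t).
  { intros t. eapply D_cont. apply (D_mult (fun t => exp (- 0 * t)) (Kker N a b)). apply D_explin. apply D_Kker. }
  assert (Ht0 : tends0 (fun T => sum_range 1 N (fun j => a j * Rj j T))).
  { apply (tends0_sum 1 N (fun j T => a j * Rj j T)). intros; apply tends0_scal, Rj_t0; lia. }
  intros eps He. destruct (Ht0 eps He) as [T0 HT0]. exists T0. intros T HT.
  assert (HI : is_RInt (fun t => exp (- 0 * t) * Kker N a b t) 0 T (minus (Phi T) (Phi 0))).
  { apply (@is_RInt_derive R_CompleteNormedModule). intros; apply is_derive_Reals, HD. intros; apply Hc. }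
  destruct (RI_of_is _ _ _ _ HI) as [pr Hpr]. exists pr. rewrite Hpr.
  assert (HP0 : Phi 0 = - sum_range 1 N a).
  { unfold Phi. f_equal. apply sr_ext. intros. rewrite Rj0 by lia. ring. }
  replace (minus (Phi T) (Phi 0) - sum_range 1 N a) with (- sum_range 1 N (fun j => a j * Rj j T)).
  rewrite Rabs_Ropp. apply HT0; auto.
  unfold minus, plus, opp; simpl. rewrite HP0. unfold Phi. ring.
Qed.
End Lap.

Lemma sr_mult_r lo hi f c : sum_range lo hi f * c = sum_range lo hi (fun i => f i * c).
Proof. rewrite Rmult_comm, <- sr_scal. apply sr_ext; intros; ring. Qed.

Section Mem.
Variable N : nat.
Variables a b : nat -> R.
Variable u0 : R.
Variable u : R -> R.
Variable v : nat -> R -> R.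
Hypothesis HN : (1 <= N)%nat.
Hypothesis Hb : forall j, (1 <= j <= N)%nat -> 0 < b j.
Hypothesis Hd : forall i j, (1 <= i <= N)%nat -> (1 <= j <= N)%nat -> i <> j -> b i <> b j.
Hypothesis Hu : forall t, derivable_pt_lim u t (- sum_range 1 N a * u t + b 1%nat * v 1%nat t).
Hypothesis Hv : forall j t, (1 <= j <= N - 1)%nat ->
     derivable_pt_lim (v j) t (a j * u t - b j * v j t + b (S j) * v (S j) t).
Hypothesis HvN : forall t, derivable_pt_lim (v N) t (a N * u t - b N * v N t).
Hypothesis Hv0 : forall j, (1 <= j <= N)%nat -> v j 0 = 0.

Definition Ef i t := RInt (fun s => exp (b i * s) * u s) 0 t.
Definition Cc i t := exp (- b i * t) * Ef i t.
Definition V m t := sum_range m N (fun j => a j * Wg b m j (fun i => Cc i t)).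

Lemma integrand_cont i s : continuous (fun s => exp (b i * s) * u s) s.
Proof. eapply D_cont. apply (D_mult (fun s => exp (b i * s)) u). apply D_explin. apply Hu. Qed.

Lemma Ef_is i t : is_RInt (fun s => exp (b i * s) * u s) 0 t (Ef i t).
Proof. unfold Ef. apply (@RInt_correct R_CompleteNormedModule). apply (@ex_RInt_continuous R_CompleteNormedModule).
  intros; apply integrand_cont. Qed.

Lemma D_Ef i t : derivable_pt_lim (Ef i) t (exp (b i * t) * u t).
Proof. apply is_derive_Reals.
  apply (@is_derive_RInt R_NormedModule (fun s => exp (b i * s) * u s) (Ef i) 0 t).
  - apply filter_forall. intros. apply Ef_is.
  - apply integrand_cont. Qed.

Lemma D_Cc i t : derivable_pt_lim (Cc i) t (u t - b i * Cc i t).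
Proof. unfold Cc. replace (u t - b i * (exp (- b i * t) * Ef i t)) with
   (- b i * exp (- b i * t) * Ef i t + exp (- b i * t) * (exp (b i * t) * u t)).
  apply (D_mult (fun t => exp (- b i * t)) (Ef i)). apply D_explin. apply D_Ef.
  replace (exp (- b i * t) * (exp (b i * t) * u t)) with (exp (- b i * t + b i * t) * u t) by (rewrite exp_plus; ring).
  replace (- b i * t + b i * t) with 0 by ring. rewrite exp_0. ring. Qed.

Lemma Cc0 i : Cc i 0 = 0.
Proof. unfold Cc, Ef. rewrite RInt_point. apply Rmult_0_r. Qed.

Lemma D_V m t : derivable_pt_lim (V m) t (sum_range m N (fun j => a j * Wg b m j (fun i => u t - b i * Cc i t))).
Proof. unfold V. apply (D_ext (fun t => sum_range m N (fun j => (fun j t => a j * Wg b m j (fun i => Cc i t)) j t))).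
  { intros; reflexivity. } apply D_sum. intros j Hj. apply D_scal.
  apply (D_Wg b m j (fun i t => Cc i t)). intros; apply D_Cc. Qed.

Lemma Wg_affine m j x c : (1 <= m)%nat -> (m <= j <= N)%nat ->
  Wg b m j (fun i => x - b i * c i) = (if Nat.eq_dec m j then b m * x else 0) - b m * Wg b m j c + b m * Wg b (S m) j c.
Proof. intros. unfold Wg at 1.
  rewrite (sr_ext _ _ _ (fun i => x * (b i * gpsi b m i j) + (-1) * (b i * gpsi b m i j * (b i * c i)))) by (intros; ring).
  rewrite sr_plus, !sr_scal. rewrite (W_u N b Hd) by auto. rewrite (W_rec N b Hd) by auto.
  destruct (Nat.eq_dec m j); ring. Qed.

Lemma V_val m t : (1 <= m <= N)%nat ->
  sum_range m N (fun j => a j * Wg b m j (fun i => u t - b i * Cc i t)) = b m * a m * u t - b m * V m t + b m * V (S m) t.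
Proof. intros Hm. unfold V. rewrite !(sr_first m N) by lia. rewrite Wg_affine by lia.
  destruct (Nat.eq_dec m m); [|lia]. rewrite W_empty.
  rewrite (sr_ext (S m) N _ (fun j => (- b m) * (a j * Wg b m j (fun i => Cc i t)) + b m * (a j * Wg b (S m) j (fun i => Cc i t)))).
  - rewrite sr_plus, !sr_scal. ring.
  - intros j Hj. rewrite Wg_affine by lia. destruct (Nat.eq_dec m j); [lia|]. ring. Qed.

Lemma V0 m : V m 0 = 0.
Proof. unfold V. apply sr_zero'. intros j _. unfold Wg. rewrite sr_zero'. ring. intros; rewrite Cc0; ring. Qed.

Lemma V_empty t : V (S N) t = 0.
Proof. unfold V. apply sr_empty. lia. Qed.

Lemma bv_V : forall d m, (m + d = N)%nat -> (1 <= m)%nat -> forall t, b m * v m t = V m t.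
Proof. induction d; intros m Hmd Hm t.
  - rewrite Nat.add_0_r in Hmd. subst m.
    assert (H := zero_ode (fun t => b N * v N t - V N t)
      (fun t => b N * (a N * u t - b N * v N t) - (b N * a N * u t - b N * V N t + b N * V (S N) t)) (b N)).
    assert (forall t, b N * v N t - V N t = 0).
    { apply H.
      - intros s. apply D_minus. apply D_scal, HvN. rewrite <- V_val by lia. apply D_V.
      - intros s. rewrite V_empty. ring.
      - rewrite V0, Hv0 by lia. ring. }
    specialize (H0 t). lra.
  - assert (IH : forall t, b (S m) * v (S m) t = V (S m) t) by (apply IHd; lia).
    assert (H := zero_ode (fun t => b m * v m t - V m t)
      (fun t => b m * (a m * u t - b m * v m t + b (S m) * v (S m) t) - (b m * a m * u t - b m * V m t + b m * V (S m) t)) (b m)).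
    assert (forall t, b m * v m t - V m t = 0).
    { apply H.
      - intros s. apply D_minus. apply D_scal, Hv. lia. rewrite <- V_val by lia. apply D_V.
      - intros s. rewrite IH. ring.
      - rewrite V0, Hv0 by lia. ring. }
    specialize (H0 t). lra.
Qed.

Lemma bv1 t : b 1%nat * v 1%nat t = V 1 t.
Proof. apply (bv_V (N - 1)); lia. Qed.

Lemma memory t : exists pr : Riemann_integrable (fun s => Kker N a b (t - s) * u s) 0 t, RiemannInt pr = b 1%nat * v 1%nat t.
Proof. apply RI_of_is. rewrite bv1.
  apply (is_RInt_ext (fun s => sum_range 1 N (fun j => (fun j s => sum_range 1 j (fun i =>
       (a j * (b i * gpsi b 1 i j)) * (exp (- b i * t) * (exp (b i * s) * u s)))) j s))).
  - intros s _. unfold Kker, Kj. rewrite sr_mult_r. apply sr_ext. intros j _.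
    rewrite Rmult_assoc, sr_mult_r, <- sr_scal. apply sr_ext. intros i _.
    replace (- b i * (t - s)) with (- b i * t + b i * s) by ring. rewrite exp_plus. unfold psi, gpsi. ring.
  - replace (V 1 t) with (sum_range 1 N (fun j => sum_range 1 j (fun i =>
       (a j * (b i * gpsi b 1 i j)) * (exp (- b i * t) * Ef i t)))).
    + apply I_sum. intros j _. apply I_sum. intros i _. apply I_scal, I_scal. apply Ef_is.
    + unfold V, Wg, Cc. apply sr_ext. intros j _. rewrite <- sr_scal. apply sr_ext. intros; ring.
Qed.
End Mem.

Lemma telescope (F : nat -> R) j : sum_range 1 j (fun k => F k - F (k - 1)%nat) = F j - F 0%nat.
Proof. induction j.
  - rewrite sr_empty by lia. ring.
  - rewrite sr_last by lia. rewrite IHj. replace (S j - 1)%nat with j by lia. ring. Qed.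

Lemma CS (d : nat -> R) j : (sum_range 1 j d) * (sum_range 1 j d) <= INR j * sum_range 1 j (fun k => d k * d k).
Proof. induction j.
  - rewrite !sr_empty by lia. simpl. lra.
  - rewrite !sr_last by lia. rewrite S_INR.
    set (s := sum_range 1 j d) in *. set (q := sum_range 1 j (fun k => d k * d k)) in *. set (x := d (S j)).
    assert (0 <= q) by (apply sr_nonneg; intros; nra).
    pose proof (pos_INR j). destruct (Req_dec (INR j) 0).
    + assert (j = 0%nat) by (apply INR_eq; simpl; auto). subst j. unfold s. rewrite sr_empty by lia. nra.
    + assert (0 < INR j) by lra.
      assert (INR j * ((s + x) * (s + x)) <= INR j * ((INR j + 1) * (q + x * x))).
      { assert (INR j * (s*s) <= INR j * (INR j * q)) by (apply Rmult_le_compat_l; lra).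
        assert (0 <= (s - INR j * x) * (s - INR j * x)) by (pose proof (Rle_0_sqr (s - INR j * x)); unfold Rsqr in *; lra). nra. }
      apply Rmult_le_reg_l with (INR j); lra.
Qed.

Definition Aa N (a : nat -> R) j := sum_range j N a.

Lemma dirichlet N a (F : nat -> R) : (1 <= N)%nat ->
  2 * (F 0%nat * (- Aa N a 1 * F 0%nat + Aa N a 1 * F 1%nat) +
       sum_range 1 N (fun j => F j * (a j * F 0%nat - Aa N a j * F j + Aa N a (S j) * F (S j)))) =
  - (sum_range 1 N (fun j => a j * ((F 0%nat - F j) * (F 0%nat - F j))) +
     sum_range 1 N (fun j => Aa N a j * ((F j - F (j - 1)%nat) * (F j - F (j - 1)%nat)))).
Proof. intros HN.
  assert (Arec : forall j, (j <= N)%nat -> a j = Aa N a j - Aa N a (S j)).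
  { intros. unfold Aa. rewrite (sr_first j N) by lia. ring. }
  assert (Aend : Aa N a (S N) = 0) by (unfold Aa; apply sr_empty; lia).
  destruct N as [|n]; [lia|].
  set (A := fun j => Aa (S n) a j) in *.
  rewrite (sr_ext 1 (S n) (fun j => F j * (a j * F 0%nat - A j * F j + A (S j) * F (S j)))
     (fun j => F 0%nat * (a j * F j) + (-1) * (A j * (F j * F j)) + A (S j) * (F j * F (S j)))) by (intros; ring).
  rewrite (sr_ext 1 (S n) (fun j => a j * ((F 0%nat - F j) * (F 0%nat - F j)))
     (fun j => (F 0%nat * F 0%nat) * a j + (-2 * F 0%nat) * (a j * F j) + (A j * (F j * F j) + (-1) * (A (S j) * (F j * F j)))))
     by (intros; rewrite Arec by lia; unfold A; ring).
  rewrite (sr_ext 1 (S n) (fun j => A j * ((F j - F (j - 1)%nat) * (F j - F (j - 1)%nat)))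
     (fun j => A j * (F j * F j) + (-2) * (A j * (F j * F (j - 1)%nat)) + A j * (F (j-1)%nat * F (j - 1)%nat)))
     by (intros; unfold A; ring).
  rewrite !sr_plus, !sr_scal.
  assert (E1 : sum_range 1 (S n) (fun j => A (S j) * (F j * F (S j))) =
               sum_range 1 n (fun j => A (S j) * (F j * F (S j)))).
  { rewrite sr_last by lia. rewrite Aend. ring. }
  assert (E2 : sum_range 1 (S n) (fun j => A j * (F j * F (j - 1)%nat)) =
               A 1%nat * (F 1%nat * F 0%nat) + sum_range 1 n (fun j => A (S j) * (F j * F (S j)))).
  { rewrite sr_first by lia. replace (S 1) with (S 1) by reflexivity. rewrite sr_shift.
    simpl (1 - 1)%nat. f_equal. apply sr_ext. intros. replace (S i - 1)%nat with i by lia. ring. }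
  assert (E3 : sum_range 1 (S n) (fun j => A (S j) * (F j * F j)) =
               sum_range 1 n (fun j => A (S j) * (F j * F j))).
  { rewrite sr_last by lia. rewrite Aend. ring. }
  assert (E4 : sum_range 1 (S n) (fun j => A j * (F (j - 1)%nat * F (j - 1)%nat)) =
               A 1%nat * (F 0%nat * F 0%nat) + sum_range 1 n (fun j => A (S j) * (F j * F j))).
  { rewrite sr_first by lia. rewrite sr_shift.
    simpl (1 - 1)%nat. f_equal. apply sr_ext. intros. replace (S i - 1)%nat with i by lia. ring. }
  assert (E5 : sum_range 1 (S n) a = A 1%nat) by reflexivity.
  rewrite E1, E2, E3, E4, E5. ring.
Qed.

Section Conv.
Variable N : nat.
Variables a b : nat -> R.
Variable u0 : R.
Variable u : R -> R.
Variable v : nat -> R -> R.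
Hypothesis HN : (1 <= N)%nat.
Hypothesis Ha : forall j, (1 <= j <= N)%nat -> 0 <= a j.
Hypothesis HaN : 0 < a N.
Hypothesis Hb : forall j, (1 <= j <= N)%nat -> 0 < b j.
Hypothesis Hu : forall t, derivable_pt_lim u t (- sum_range 1 N a * u t + b 1%nat * v 1%nat t).
Hypothesis Hv : forall j t, (1 <= j <= N - 1)%nat ->
     derivable_pt_lim (v j) t (a j * u t - b j * v j t + b (S j) * v (S j) t).
Hypothesis HvN : forall t, derivable_pt_lim (v N) t (a N * u t - b N * v N t).
Hypothesis Hu0 : u 0 = u0.
Hypothesis Hv0 : forall j, (1 <= j <= N)%nat -> v j 0 = 0.

Let A j := Aa N a j.
Definition pi j := / b j * sum_range j N a.
Definition Zc := 1 + sum_range 1 N pi.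
Definition uinf := u0 / Zc.

Lemma Arec j : (j <= N)%nat -> A j = a j + A (S j).
Proof. intros. unfold A, Aa. apply sr_first. lia. Qed.
Lemma Aend : A (S N) = 0.
Proof. unfold A, Aa. apply sr_empty. lia. Qed.
Lemma Age j : (1 <= j <= N)%nat -> a N <= A j.
Proof. intros. unfold A, Aa. destruct N as [|n]; [lia|]. rewrite sr_last by lia.
  assert (0 <= sum_range j n a) by (apply sr_nonneg; intros; apply Ha; lia). lra. Qed.
Lemma pi_pos j : (1 <= j <= N)%nat -> 0 < pi j.
Proof. intros. unfold pi. assert (0 < b j) by (apply Hb; lia). pose proof (Age j H).
  apply Rmult_lt_0_compat. apply Rinv_0_lt_compat; auto. unfold A, Aa in *. lra. Qed.
Lemma b_pi j : (1 <= j <= N)%nat -> b j * pi j = A j.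
Proof. intros. unfold pi, A, Aa. assert (0 < b j) by (apply Hb; lia). field. lra. Qed.
Lemma Zc_ge : 1 <= Zc.
Proof. unfold Zc. assert (0 <= sum_range 1 N pi) by (apply sr_nonneg; intros; left; apply pi_pos; lia). lra. Qed.

Definition dv j t := a j * u t - b j * v j t + (if Nat.ltb j N then b (S j) * v (S j) t else 0).

Lemma D_v j t : (1 <= j <= N)%nat -> derivable_pt_lim (v j) t (dv j t).
Proof. intros. unfold dv. destruct (Nat.ltb j N) eqn:E.
  - apply Nat.ltb_lt in E. apply Hv. lia.
  - apply Nat.ltb_ge in E. assert (j = N) by lia. subst. rewrite Rplus_0_r. apply HvN. Qed.

Lemma sum_dv s : sum_range 1 N (fun j => dv j s) = sum_range 1 N a * u s - b 1%nat * v 1%nat s.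
Proof. unfold dv.
  rewrite (sr_ext _ _ _ (fun j => u s * a j + (-1) * (b j * v j s) + (if Nat.ltb j N then b (S j) * v (S j) s else 0)))
    by (intros; ring).
  rewrite !sr_plus, !sr_scal. destruct N as [|n]; [lia|].
  rewrite (sr_last 1 n (fun j => if Nat.ltb j (S n) then _ else _)) by lia.
  rewrite Nat.ltb_irrefl.
  rewrite (sr_ext 1 n _ (fun j => (fun j => b j * v j s) (S j))).
  2:{ intros. destruct (Nat.ltb i (S n)) eqn:E; auto. apply Nat.ltb_ge in E. lia. }
  rewrite <- (sr_shift 1 n (fun j => b j * v j s)). rewrite (sr_first 1 (S n) (fun j => b j * v j s)) by lia. ring.
Qed.

Lemma mass t : u t + sum_range 1 N (fun j => v j t) = u0.
Proof.
  assert (H := zero_ode (fun t => u t + sum_range 1 N (fun j => v j t) - u0)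
     (fun t => (- sum_range 1 N a * u t + b 1%nat * v 1%nat t) + sum_range 1 N (fun j => dv j t)) 0).
  assert (forall t, u t + sum_range 1 N (fun j => v j t) - u0 = 0); [|specialize (H0 t); lra].
  apply H.
  - intros s. replace (- sum_range 1 N a * u s + b 1%nat * v 1%nat s + sum_range 1 N (fun j => dv j s)) with
      (- sum_range 1 N a * u s + b 1%nat * v 1%nat s + sum_range 1 N (fun j => dv j s) - 0) by ring.
    apply D_minus; [|apply D_const]. apply D_plus; auto. apply D_sum. intros; apply D_v; auto.
  - intros s. rewrite sum_dv. ring.
  - rewrite Hu0. rewrite sr_zero'. ring. intros; apply Hv0; auto.
Qed.

Lemma sqnn x : 0 <= x * x.
Proof. pose proof (Rle_0_sqr x). unfold Rsqr in H. exact H. Qed.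

Definition Fe t j := match j with O => u t - uinf | S _ => (v j t - pi j * uinf) / pi j end.

Lemma v_F j t : (1 <= j <= N)%nat -> v j t = pi j * Fe t j + pi j * uinf.
Proof. intros. destruct j; [lia|]. simpl Fe. pose proof (pi_pos (S j) H). field. lra. Qed.

Lemma dv_F j t : (1 <= j <= N)%nat -> dv j t = a j * Fe t 0 - A j * Fe t j + A (S j) * Fe t (S j).
Proof. intros. unfold dv. rewrite (v_F j t) by auto.
  replace (b j * (pi j * Fe t j + pi j * uinf)) with ((b j * pi j) * Fe t j + (b j * pi j) * uinf) by ring.
  rewrite b_pi by auto.
  assert (E : (if Nat.ltb j N then b (S j) * v (S j) t else 0) = A (S j) * Fe t (S j) + A (S j) * uinf).
  { destruct (Nat.ltb j N) eqn:E.
    - apply Nat.ltb_lt in E. rewrite (v_F (S j) t) by lia.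
      replace (b (S j) * (pi (S j) * Fe t (S j) + pi (S j) * uinf)) with
        ((b (S j) * pi (S j)) * Fe t (S j) + (b (S j) * pi (S j)) * uinf) by ring.
      rewrite b_pi by lia. ring.
    - apply Nat.ltb_ge in E. assert (j = N) by lia. subst. rewrite Aend. ring. }
  rewrite E. rewrite (Arec j) by lia. simpl Fe. ring. Qed.

Lemma du_F t : - sum_range 1 N a * u t + b 1%nat * v 1%nat t = - A 1%nat * Fe t 0 + A 1%nat * Fe t 1%nat.
Proof. rewrite (v_F 1 t) by lia.
  replace (b 1%nat * (pi 1%nat * Fe t 1%nat + pi 1%nat * uinf)) with
    ((b 1%nat * pi 1%nat) * Fe t 1%nat + (b 1%nat * pi 1%nat) * uinf) by ring.
  rewrite b_pi by lia. unfold A, Aa. simpl Fe. ring. Qed.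

Definition L t := Fe t 0 * Fe t 0 + sum_range 1 N (fun j => pi j * (Fe t j * Fe t j)).
Definition Dform t := sum_range 1 N (fun j => a j * ((Fe t 0 - Fe t j) * (Fe t 0 - Fe t j))) +
     sum_range 1 N (fun j => A j * ((Fe t j - Fe t (j - 1)%nat) * (Fe t j - Fe t (j - 1)%nat))).

Lemma D_F0 t : derivable_pt_lim (fun t => Fe t 0) t (- sum_range 1 N a * u t + b 1%nat * v 1%nat t).
Proof. apply (D_ext (fun t => u t - uinf)). intros; reflexivity.
  rewrite <- (Rminus_0_r (_ + _)). apply D_minus; [apply Hu | apply D_const]. Qed.

Lemma D_Fj j t : (1 <= j <= N)%nat -> derivable_pt_lim (fun t => Fe t j) t (dv j t / pi j).
Proof. intros. destruct j; [lia|].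
  apply (D_ext (fun t => / pi (S j) * (v (S j) t - pi (S j) * uinf))). intros; simpl; unfold Rdiv; ring.
  replace (dv (S j) t / pi (S j)) with (/ pi (S j) * (dv (S j) t - 0)) by (unfold Rdiv; ring).
  apply D_scal, D_minus; [apply D_v; auto | apply D_const]. Qed.

Lemma D_L t : derivable_pt_lim L t (- Dform t).
Proof.
  assert (H : derivable_pt_lim L t
    ((- sum_range 1 N a * u t + b 1%nat * v 1%nat t) * Fe t 0 + Fe t 0 * (- sum_range 1 N a * u t + b 1%nat * v 1%nat t) +
     sum_range 1 N (fun j => pi j * (dv j t / pi j * Fe t j + Fe t j * (dv j t / pi j))))).
  { unfold L. apply (D_plus (fun t => Fe t 0 * Fe t 0)).
    - apply (D_mult (fun t => Fe t 0) (fun t => Fe t 0)); apply D_F0.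
    - apply (D_sum 1 N (fun j t => pi j * (Fe t j * Fe t j))). intros. apply D_scal.
      apply (D_mult (fun t => Fe t i) (fun t => Fe t i)); apply D_Fj; auto. }
  replace (- Dform t) with
    ((- sum_range 1 N a * u t + b 1%nat * v 1%nat t) * Fe t 0 + Fe t 0 * (- sum_range 1 N a * u t + b 1%nat * v 1%nat t) +
     sum_range 1 N (fun j => pi j * (dv j t / pi j * Fe t j + Fe t j * (dv j t / pi j)))); auto.
  rewrite (sr_ext _ _ (fun j => pi j * (dv j t / pi j * Fe t j + Fe t j * (dv j t / pi j)))
     (fun j => 2 * (Fe t j * (a j * Fe t 0 - A j * Fe t j + A (S j) * Fe t (S j))))).
  2:{ intros. rewrite <- dv_F by auto. pose proof (pi_pos i H0). field. lra. }
  rewrite sr_scal, du_F. unfold Dform, A. rewrite <- (dirichlet N a (Fe t)) by auto. ring.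
Qed.

Lemma Dform_nonneg t : 0 <= Dform t.
Proof. unfold Dform. assert (0 <= sum_range 1 N (fun j => a j * ((Fe t 0 - Fe t j) * (Fe t 0 - Fe t j)))).
  { apply sr_nonneg. intros. apply Rmult_le_pos. apply Ha; auto. apply sqnn. }
  assert (0 <= sum_range 1 N (fun j => A j * ((Fe t j - Fe t (j - 1)%nat) * (Fe t j - Fe t (j - 1)%nat)))).
  { apply sr_nonneg. intros. pose proof (Age i H0). apply Rmult_le_pos. lra. apply sqnn. }
  lra. Qed.

Definition kap := sum_range 1 N pi * INR N / a N + 1.

Lemma kap_pos : 0 < kap.
Proof. unfold kap. assert (0 <= sum_range 1 N pi) by (apply sr_nonneg; intros; left; apply pi_pos; auto).
  pose proof (pos_INR N). assert (0 <= sum_range 1 N pi * INR N / a N).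
  { unfold Rdiv. apply Rmult_le_pos. nra. left. apply Rinv_0_lt_compat; auto. } lra. Qed.

Lemma poincare t : L t <= kap * Dform t.
Proof.
  set (F := Fe t). set (S2 := sum_range 1 N (fun k => (F k - F (k - 1)%nat) * (F k - F (k - 1)%nat))).
  assert (Hsum : sum_range 1 N (fun j => pi j * F j) = - F 0%nat).
  { rewrite (sr_ext _ _ _ (fun j => v j t + (- uinf) * pi j)).
    2:{ intros. unfold F. rewrite (v_F i t) by auto. ring. }
    rewrite sr_plus, sr_scal. pose proof (mass t). unfold F; simpl Fe.
    assert (uinf * Zc = u0). { unfold uinf. pose proof Zc_ge. field. lra. }
    unfold Zc in H0. lra. }
  assert (H1 : L t <= sum_range 1 N (fun j => pi j * ((F j - F 0%nat) * (F j - F 0%nat)))).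
  { rewrite (sr_ext _ _ _ (fun j => pi j * (F j * F j) + (-2 * F 0%nat) * (pi j * F j) + (F 0%nat * F 0%nat) * pi j))
      by (intros; ring).
    rewrite !sr_plus, !sr_scal, Hsum. unfold L. fold F.
    assert (0 <= sum_range 1 N pi) by (apply sr_nonneg; intros; left; apply pi_pos; auto).
    assert (0 <= F 0%nat * F 0%nat) by apply sqnn. nra. }
  assert (H2 : forall j, (1 <= j <= N)%nat -> (F j - F 0%nat) * (F j - F 0%nat) <= INR N * S2).
  { intros j Hj. rewrite <- (telescope F j).
    eapply Rle_trans. apply (CS (fun k => F k - F (k - 1)%nat) j).
    assert (0 <= sum_range 1 j (fun k => (F k - F (k - 1)%nat) * (F k - F (k - 1)%nat)))
      by (apply sr_nonneg; intros; apply sqnn).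
    assert (sum_range 1 j (fun k => (F k - F (k - 1)%nat) * (F k - F (k - 1)%nat)) <= S2).
    { unfold S2. rewrite (sr_split 1 j N) by lia.
      assert (0 <= sum_range (S j) N (fun k => (F k - F (k - 1)%nat) * (F k - F (k - 1)%nat)))
        by (apply sr_nonneg; intros; apply sqnn). lra. }
    assert (INR j <= INR N) by (apply le_INR; lia). pose proof (pos_INR j).
    assert (0 <= S2) by lra. nra. }
  assert (H3 : a N * S2 <= Dform t).
  { unfold S2. rewrite <- sr_scal. unfold Dform. fold F.
    assert (0 <= sum_range 1 N (fun j => a j * ((F 0%nat - F j) * (F 0%nat - F j)))).
    { apply sr_nonneg. intros. apply Rmult_le_pos. apply Ha; auto. apply sqnn. }
    assert (sum_range 1 N (fun k => a N * ((F k - F (k - 1)%nat) * (F k - F (k - 1)%nat))) <=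
            sum_range 1 N (fun j => A j * ((F j - F (j - 1)%nat) * (F j - F (j - 1)%nat)))).
    { apply sr_le. intros. apply Rmult_le_compat_r. apply sqnn. apply Age; auto. }
    lra. }
  assert (H4 : sum_range 1 N (fun j => pi j * ((F j - F 0%nat) * (F j - F 0%nat))) <=
               sum_range 1 N pi * (INR N * S2)).
  { rewrite Rmult_comm, <- sr_scal. apply sr_le. intros. rewrite (Rmult_comm (INR N * S2)).
    apply Rmult_le_compat_l. left; apply pi_pos; auto. apply H2; auto. }
  pose proof (Dform_nonneg t).
  assert (0 <= sum_range 1 N pi) by (apply sr_nonneg; intros; left; apply pi_pos; auto).
  pose proof (pos_INR N).
  assert (S2 <= Dform t / a N). { apply Rmult_le_reg_l with (a N); auto. field_simplify; lra. }
  unfold kap.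
  assert (sum_range 1 N pi * (INR N * S2) <= sum_range 1 N pi * INR N / a N * Dform t).
  { replace (sum_range 1 N pi * INR N / a N * Dform t) with (sum_range 1 N pi * (INR N * (Dform t / a N))) by (field; lra).
    apply Rmult_le_compat_l; auto. apply Rmult_le_compat_l; auto. }
  nra.
Qed.

Lemma converge : forall eps, eps > 0 -> exists T, forall t, t >= T ->
     Rabs (u t - u0 / (1 + sum_range 1 N (fun i => / b i * sum_range i N a))) < eps.
Proof.
  intros eps He. pose proof kap_pos as Hk. set (c := / kap).
  assert (Hc : 0 < c) by (apply Rinv_0_lt_compat; auto).
  set (G := fun t => exp (c * t) * L t).
  assert (HG : forall t, derivable_pt_lim G t (c * exp (c * t) * L t + exp (c * t) * (- Dform t))).
  { intros. apply (D_mult (fun t => exp (c * t)) L). apply D_explin. apply D_L. }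
  assert (HG' : forall t, c * exp (c * t) * L t + exp (c * t) * (- Dform t) <= 0).
  { intros. pose proof (poincare t). pose proof (exp_pos (c * t)).
    assert (c * L t <= Dform t).
    { unfold c. apply Rmult_le_reg_l with kap; auto. field_simplify; lra. }
    nra. }
  assert (Hdec : forall t, 0 <= t -> G t <= G 0).
  { intros t Ht. destruct (Req_dec t 0). subst; lra.
    destruct (MVT_cor2 G _ 0 t ltac:(lra) (fun x _ => HG x)) as [x [Hx _]].
    specialize (HG' x). nra. }
  destruct (tends0_scal (L 0) _ (tends0_exp c Hc) (eps * eps)) as [T HT]. nra.
  exists (Rmax T 0). intros t Ht. pose proof (Rmax_l T 0). pose proof (Rmax_r T 0).
  specialize (HT t ltac:(lra)). specialize (Hdec t ltac:(lra)).
  assert (HL : Fe t 0 * Fe t 0 <= L t).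
  { unfold L. assert (0 <= sum_range 1 N (fun j => pi j * (Fe t j * Fe t j))).
    { apply sr_nonneg. intros. apply Rmult_le_pos. left; apply pi_pos; auto. apply sqnn. } lra. }
  assert (L t <= L 0 * exp (- c * t)).
  { unfold G in Hdec. rewrite Rmult_0_r, exp_0, Rmult_1_l in Hdec.
    replace (L t) with (exp (- c * t) * (exp (c * t) * L t)).
    pose proof (exp_pos (- c * t)). nra.
    rewrite <- Rmult_assoc, <- exp_plus. replace (- c * t + c * t) with 0 by ring. rewrite exp_0. ring. }
  pose proof (Rle_abs (L 0 * exp (- c * t))).
  change (1 + sum_range 1 N (fun i => / b i * sum_range i N a)) with Zc. fold uinf.
  replace (u t - uinf) with (Fe t 0) by reflexivity.
  assert (Fe t 0 * Fe t 0 < eps * eps) by lra.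
  destruct (Rlt_or_le (Rabs (Fe t 0)) eps); auto.
  assert (Rabs (Fe t 0) * Rabs (Fe t 0) = Fe t 0 * Fe t 0) by (rewrite <- Rabs_mult; apply Rabs_pos_eq; nra).
  nra.
Qed.
End Conv.

Lemma last_pos N (a : nat -> R) : (forall j, (1 <= j <= N)%nat -> 0 <= a j) ->
  (forall j, (1 <= j <= N)%nat -> a j = 0) \/
  exists J, (1 <= J <= N)%nat /\ 0 < a J /\ forall j, (J < j <= N)%nat -> a j = 0.
Proof. induction N; intros Ha.
  - left. intros; lia.
  - destruct (Rlt_dec 0 (a (S N))).
    + right. exists (S N). split; [lia|]. split; auto. intros; lia.
    + assert (a (S N) = 0) by (pose proof (Ha (S N) ltac:(lia)); lra).
      destruct IHN as [H1|[J [H1 [H2 H3]]]]. intros; apply Ha; lia.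
      * left. intros j Hj. destruct (Nat.eq_dec j (S N)). subst; auto. apply H1; lia.
      * right. exists J. split; [lia|]. split; auto. intros j Hj. destruct (Nat.eq_dec j (S N)). subst; auto. apply H3; lia.
Qed.

Theorem theorem3p1
  (N : nat) (a b : nat -> R) (u0 : R)
  (u : R -> R) (v : nat -> R -> R) :
  (1 <= N)%nat ->
  (forall j, (1 <= j <= N)%nat -> 0 <= a j) ->
  (forall j, (1 <= j <= N)%nat -> 0 < b j) ->
  (forall i j, (1 <= i <= N)%nat -> (1 <= j <= N)%nat -> i <> j -> b i <> b j) ->
  (forall t, derivable_pt_lim u t (- sum_range 1 N a * u t + b 1%nat * v 1%nat t)) ->
  (forall j t, (1 <= j <= N - 1)%nat ->
     derivable_pt_lim (v j) t (a j * u t - b j * v j t + b (S j) * v (S j) t)) ->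
  (forall t, derivable_pt_lim (v N) t (a N * u t - b N * v N t)) ->
  u 0 = u0 ->
  (forall j, (1 <= j <= N)%nat -> v j 0 = 0) ->
  (forall t, 0 <= t ->
     exists pr : Riemann_integrable (fun s => Kker N a b (t - s) * u s) 0 t,
       derivable_pt_lim u t (- sum_range 1 N a * u t + RiemannInt pr)) /\
  laplace_at (Kker N a b) 0 (sum_range 1 N a) /\
  (forall j t, (1 <= j <= N)%nat -> 0 <= t -> 0 <= Kj b j t) /\
  (forall t, 0 <= t -> 0 <= Kker N a b t) /\
  (forall eps, eps > 0 -> exists T, forall t, t >= T ->
     Rabs (u t - u0 / (1 + sum_range 1 N (fun i => / b i * sum_range i N a))) < eps).
Proof.
  intros HN Ha Hb Hd Hu Hv HvN Hu0 Hv0.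
  split; [|split; [|split; [|split]]].
  - intros t _. destruct (memory N a b u v HN Hd Hu Hv HvN Hv0 t) as [pr Hpr]. exists pr.
    rewrite Hpr. apply Hu.
  - apply laplace0; auto.
  - intros. apply (Kj_pos N); auto.
  - intros t Ht. unfold Kker. apply sr_nonneg. intros j Hj. apply Rmult_le_pos. apply Ha; auto.
    apply (Kj_pos N); auto.
  - destruct (last_pos N a Ha) as [H0|[J [HJ1 [HJ2 HJ3]]]].
    +
      assert (HA : sum_range 1 N a = 0) by (apply sr_zero'; auto).
      assert (Hv1 : forall t, b 1%nat * v 1%nat t = 0).
      { intros t. rewrite (bv_V N a b u v HN Hd Hu Hv HvN Hv0 (N - 1) 1) by lia.
        unfold V. apply sr_zero'. intros j Hj. rewrite H0 by lia. ring. }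
      assert (Hc : forall t, u t - u0 = 0).
      { apply (zero_ode _ (fun t => (- sum_range 1 N a * u t + b 1%nat * v 1%nat t) - 0) 0).
        - intros. apply D_minus; [apply Hu | apply D_const].
        - intros. rewrite HA, Hv1. ring.
        - rewrite Hu0. ring. }
      intros eps He. exists 0. intros t _.
      rewrite (sr_zero' 1 N (fun i => / b i * sum_range i N a)).
      2:{ intros i Hi. rewrite sr_zero'. ring. intros; apply H0; lia. }
      replace (u t - u0 / (1 + 0)) with (u t - u0) by (field).
      rewrite Hc, Rabs_R0. lra.
    + assert (Hsplit : forall i, (i <= S J)%nat -> sum_range i N a = sum_range i J a).
      { intros i Hi. rewrite (sr_split i J N) by lia. rewrite (sr_zero' (S J) N). ring.
        intros; apply HJ3; lia. }
      assert (HZ : sum_range 1 N (fun i => / b i * sum_range i N a) = sum_range 1 J (fun i => / b i * sum_range i J a)).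
      { rewrite (sr_split 1 J N) by lia. rewrite (sr_zero' (S J) N).
        2:{ intros i Hi. rewrite sr_zero'. ring. intros; apply HJ3; lia. }
        rewrite Rplus_0_r. apply sr_ext. intros. rewrite Hsplit by lia. auto. }
      rewrite HZ.
      apply (converge J a b u0 u v); auto; try lia.
      * intros; apply Ha; lia.
      * intros; apply Hb; lia.
      * intros t. rewrite <- Hsplit by lia. apply Hu.
      * intros j t Hj. apply Hv. lia.
      * intros t. destruct (Nat.eq_dec J N). subst; apply HvN.
        assert (HV : b (S J) * v (S J) t = 0).
        { rewrite (bv_V N a b u v HN Hd Hu Hv HvN Hv0 (N - S J) (S J)) by lia.
          unfold V. apply sr_zero'. intros j Hj. rewrite HJ3 by lia. ring. }
        pose proof (Hv J t ltac:(lia)) as H. rewrite HV, Rplus_0_r in H. exact H.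
      * intros; apply Hv0; lia.
Qed.
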